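(* Let $n\ge 1$, let $n_0>0$ and $N_+\in\mathbb{R}^n$ with positive entries, let $M_1\in\mathbb{R}$, and let $L_R\in\mathbb{R}^n$ have finite entries. For $A\in\mathbb{R}^n$ set $a_0(A)=M_1-\mathbf{1}^\top A$ and $$H(A)=A^\top\big(-L_R-\log(N_+)+\mathbf{1}\log(n_0)\big)+\sum_{i=1}^n\big(A_i\log A_i-A_i\big)+a_0(A)\log(a_0(A))-a_0(A),$$ with $\log(N_+)$ taken componentwise and the convention $0\log 0=0$, defined on $\{A\in\mathbb{R}^n: A\ge 0,\ a_0(A)\ge 0\}$. Suppose that some $A\in\mathbb{R}^n$ with $A\ge 0$ satisfies $M_1>\mathbf{1}^\top A$. Then $H$ has a unique minimizer over $A\in\mathbb{R}^n_+$ (within its domain).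
   Context: This is the Greenland–Longnecker pseudo-count problem for log relative risks: $n$ alternative exposure levels, $n_0$ total subjects at the reference exposure, $N_+$ total subjects at the alternative exposures, $M_1$ total cases, $L_R$ reported log relative risks; $A$ are pseudo-cases at alternative exposures and $a_0$ pseudo-cases at the reference exposure. The gradient of $H$ is $-L_R+\log(A)-\log(N_+)-\log(a_0(A))\mathbf{1}+\log(n_0)\mathbf{1}$. $\mathbf{1}$ denotes the all-ones vector. *)

(* Defs.v *)
From mathcomp Require Import all_boot all_order all_algebra.
From mathcomp Require Import reals exp.
Set Implicit Arguments. Unset Strict Implicit. Unset Printing Implicit Defensive.
Import Order.TTheory GRing.Theory Num.Theory.
Local Open Scope ring_scope.

Definition xlogx (R : realType) (x : R) : R := if x == 0 then 0 else x * ln x.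

Definition a0 (R : realType) (n : nat) (M1 : R) (A : 'I_n -> R) : R :=
  M1 - \sum_(i < n) A i.

Definition H (R : realType) (n : nat) (n0 : R) (Nplus : 'I_n -> R) (M1 : R)
    (LR : 'I_n -> R) (A : 'I_n -> R) : R :=
  \sum_(i < n) A i * (- LR i - ln (Nplus i) + ln n0)
  + \sum_(i < n) (xlogx (A i) - A i)
  + xlogx (a0 M1 A) - a0 M1 A.

Definition Hdom (R : realType) (n : nat) (M1 : R) (A : 'I_n -> R) : Prop :=
  (forall i, 0 <= A i) /\ 0 <= a0 M1 A.

(* Main.v *)
Require Import Defs.
From mathcomp Require Import all_boot all_order all_algebra.
From mathcomp Require Import reals exp.
From mathcomp Require Import boolp sequences.
From mathcomp Require Import ring lra.
Import Order.TTheory GRing.Theory Num.Theory.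
Local Open Scope ring_scope.
Set Implicit Arguments. Unset Strict Implicit.

Section G.
Variable R : realType.

Definition gfun (b p : R) : R := xlogx b - b * ln p - b + p.

Lemma gfun_pos (b p : R) : 0 < p -> 0 < b ->
  gfun b p = b * (ln b - ln p - 1 + expR (- (ln b - ln p))).
Proof.
move=> p0 b0.
have e : expR (- (ln b - ln p)) = p / b.
  by rewrite opprB expRD expRN !lnK.
rewrite e /gfun /xlogx gt_eqF //.
rewrite !mulrDr mulrN1 mulrCA divff ?gt_eqF // mulr1.
by rewrite mulrN.
Qed.

Lemma gfun_ge0 (b p : R) : 0 < p -> 0 <= b -> 0 <= gfun b p.
Proof.
move=> p0; rewrite le_eqVlt => /orP[/eqP <-|b0].
  rewrite /gfun /xlogx eqxx mul0r.
  lra.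
rewrite gfun_pos //; apply: mulr_ge0; first exact: ltW.
have := expR_ge1Dx (- (ln b - ln p)).
set t := ln b - ln p. move=> h. lra.
Qed.

Lemma gfun_eq0 (b p : R) : 0 < p -> 0 <= b -> gfun b p = 0 -> b = p.
Proof.
move=> p0; rewrite le_eqVlt => /orP[/eqP <-|b0].
  rewrite /gfun /xlogx eqxx mul0r => h; lra.
rewrite gfun_pos // => /eqP; rewrite mulf_eq0 gt_eqF //= => /eqP h.
have [t0|tn0] := eqVneq (ln b - ln p) 0.
  apply: ln_inj; rewrite ?posrE //. by apply/eqP; rewrite -subr_eq0 t0.
have /expR_gt1Dx : - (ln b - ln p) != 0 by rewrite oppr_eq0.
move: h; set t := ln b - ln p => h h'. exfalso. lra.
Qed.

End G.

Lemma gfun_self (R : realType) (p : R) : 0 < p -> gfun p p = 0.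
Proof. by move=> p0; rewrite /gfun /xlogx gt_eqF //; lra. Qed.

Unset Implicit Arguments.
Theorem theorem2 (R : realType) (n : nat) (n0 : R) (Nplus : 'I_n -> R)
    (M1 : R) (LR : 'I_n -> R) :
  (1 <= n)%N -> 0 < n0 -> (forall i, 0 < Nplus i) ->
  (exists A : 'I_n -> R, (forall i, 0 <= A i) /\ \sum_(i < n) A i < M1) ->
  exists A : 'I_n -> R,
    (Hdom M1 A /\ forall B, Hdom M1 B -> H n0 Nplus M1 LR A <= H n0 Nplus M1 LR B) /\
    forall A', (Hdom M1 A' /\ forall B, Hdom M1 B -> H n0 Nplus M1 LR A' <= H n0 Nplus M1 LR B) -> A' = A.
Proof.
move=> _ n00 Np [A0 [A0ge sA0]].
have M1gt0 : 0 < M1.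
  apply: le_lt_trans sA0; exact: sumr_ge0.
pose c i := - LR i - ln (Nplus i) + ln n0.
pose w i := expR (- c i).
pose W := \sum_(i < n) w i.
have W0 : 0 <= W by apply: sumr_ge0 => i _; exact: ltW (expR_gt0 _).
have W1 : 0 < 1 + W by lra.
pose q := M1 / (1 + W).
have q0 : 0 < q by apply: divr_gt0.
pose P i := q * w i.
have P0 i : 0 < P i by apply: mulr_gt0 => //; exact: expR_gt0.
have lnP i : ln (P i) = ln q - c i.
  by rewrite /P lnM ?posrE ?expR_gt0 // expRK.
have qW : q * W = M1 - q.
  have : q * (1 + W) = M1 by rewrite /q divfK // gt_eqF.
  lra.
have sP : \sum_(i < n) P i = M1 - q by rewrite -qW /W mulr_sumr.
have key : forall B, H n0 Nplus M1 LR B =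
    \sum_(i < n) gfun (B i) (P i) + gfun (a0 M1 B) q + M1 * ln q - M1.
  move=> B.
  have E1 : \sum_(i < n) gfun (B i) (P i) =
     \sum_(i < n) (xlogx (B i) - B i) + \sum_(i < n) B i * c i
     - ln q * \sum_(i < n) B i + (M1 - q).
    rewrite -sP mulr_sumr -sumrN -!big_split /=.
    apply: eq_bigr => i _; rewrite /gfun lnP; ring.
  rewrite E1 /H /a0 /gfun -/(c _).
  have -> : \sum_(i < n) B i * (- LR i - ln (Nplus i) + ln n0) = \sum_(i < n) B i * c i by [].
  ring.
have HP : H n0 Nplus M1 LR P = M1 * ln q - M1.
  rewrite key big1 ?add0r; last by move=> i _; exact: gfun_self.
  have -> : a0 M1 P = q by rewrite /a0 sP; ring.
  by rewrite gfun_self // add0r.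
have Hge : forall B, Hdom M1 B -> M1 * ln q - M1 <= H n0 Nplus M1 LR B.
  move=> B [Bge Ba0]; rewrite key.
  have : 0 <= \sum_(i < n) gfun (B i) (P i) by apply: sumr_ge0 => i _; exact: gfun_ge0.
  have := gfun_ge0 q0 Ba0. lra.
have HdomP : Hdom M1 P.
  split; first by move=> i; exact: ltW.
  by rewrite /a0 sP; lra.
exists P; split.
  by split=> // B hB; rewrite HP; exact: Hge.
move=> A' [[A'ge A'a0] A'min].
have h1 := A'min P HdomP.
rewrite HP key in h1.
have g0 := gfun_ge0 q0 A'a0.
have S0 : 0 <= \sum_(i < n) gfun (A' i) (P i).
  by apply: sumr_ge0 => i _; exact: gfun_ge0.
have Seq : \sum_(i < n) gfun (A' i) (P i) = 0 by lra.
apply: funext => i.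
apply: gfun_eq0 => //.
move/psumr_eq0P: Seq; apply => // j _; exact: gfun_ge0.
Qed.
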